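(* Let $0<\alpha<1$, let $g:\mathbb{R}\to\mathbb{R}$ be locally bounded with $g\in C^\alpha(x_0)$, i.e. there exist $C>0$ and a constant $c$ such that $|g(x)-c|\le C|x-x_0|^\alpha$ on a neighbourhood of $x_0$. Let $\Omega=\{(x,y)\in\mathbb{R}^2: y\le g(x)\}$ be the domain below the graph of $g$ (respectively $\Omega=\{(x,y): y\ge g(x)\}$ the domain above it), and $X_0=(x_0,g(x_0))$. Then $X_0$ is strong $\left(\frac1\alpha-1\right)$-accessible in both $\Omega$ and $\Omega^c=\mathbb{R}^2\setminus\Omega$, i.e. for $A\in\{\Omega,\Omega^c\}$ there exist $C'>0$ and $r_0>0$ such that $\mathrm{meas}(A\cap B(X_0,r))\ge C' r^{\frac1\alpha+1}$ for all $r\le r_0$.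
   Context: $\mathrm{meas}$ denotes Lebesgue measure on $\mathbb{R}^2$ and $B(X,r)$ the open disc of centre $X$ and radius $r$. *)

(* Defs.v *)
From HB Require Import structures.
From mathcomp Require Import all_boot all_order all_algebra.
From mathcomp Require Import all_classical all_reals all_analysis.
Set Implicit Arguments. Unset Strict Implicit. Unset Printing Implicit Defensive.
Import Order.TTheory GRing.Theory Num.Theory.
Local Open Scope classical_set_scope.
Local Open Scope ring_scope.

Definition meas2 (R : realType) : set (R * R) -> \bar R :=
  ((@lebesgue_measure R) \x (@lebesgue_measure R))%E.

Definition disc (R : realType) (X : R * R) (r : R) : set (R * R) :=
  [set P | (P.1 - X.1) ^+ 2 + (P.2 - X.2) ^+ 2 < r ^+ 2].

Definition locally_bounded (R : realType) (g : R -> R) : Prop :=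
  forall x : R, exists e : R, 0 < e /\ exists M : R,
    forall y : R, `|y - x| < e -> `|g y| <= M.

Definition pointwise_holder (R : realType) (alpha : R) (g : R -> R) (x0 : R) : Prop :=
  exists C : R, 0 < C /\ exists c : R, exists delta : R, 0 < delta /\
    forall x : R, `|x - x0| < delta -> `|g x - c| <= C * (`|x - x0| `^ alpha).

Definition below_graph (R : realType) (g : R -> R) : set (R * R) :=
  [set P | P.2 <= g P.1].
Definition above_graph (R : realType) (g : R -> R) : set (R * R) :=
  [set P | g P.1 <= P.2].

(* X0 strong p-accessible in A, with measure bound C' r^(p+2); stated via
   measurable subsets (inner-measure form) since A need not be measurable. *)
Definition strong_accessible (R : realType) (p : R) (A : set (R * R)) (X0 : R * R) : Prop :=
  exists C' : R, 0 < C' /\ exists r0 : R, 0 < r0 /\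
    forall r : R, 0 < r -> r <= r0 ->
      exists S : set (R * R), measurable S /\ S `<=` A `&` disc X0 r /\
        ((C' * r `^ (p + 2))%:E <= @meas2 R S)%E.

(* Main.v *)
Require Import Defs.
From HB Require Import structures.
From mathcomp Require Import all_boot all_order all_algebra.
From mathcomp Require Import all_classical all_reals all_analysis.
From mathcomp Require Import ring lra.
Import Order.TTheory GRing.Theory Num.Theory.
Local Open Scope classical_set_scope.
Local Open Scope ring_scope.
Lemma leb_itv {R : realType} (a b : R) : a <= b ->
  lebesgue_measure (`[a, b] : set R) = (b - a)%:E.
Proof.
move=> ab; rewrite lebesgue_measure_itv /= lte_fin.
case: ltP => [_|ba]; first by rewrite EFinB.
have -> : b = a by apply/eqP; rewrite eq_le ab ba.
by rewrite subrr.
Qed.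

Lemma rect_meas (R : realType) (a b c d : R) : a <= b -> c <= d ->
  meas2 (`[a, b] `*` `[c, d]) = ((b - a) * (d - c))%:E.
Proof.
move=> ab cd; rewrite /meas2 product_measure1E; last 2 first.
- exact: measurable_itv.
- exact: measurable_itv.
rewrite EFinM -(leb_itv _ _ ab) -(leb_itv _ _ cd). done.
Qed.
Lemma core (R : realType) (alpha : R) (g : R -> R) (x0 : R) :
  0 < alpha -> alpha < 1 -> pointwise_holder alpha g x0 ->
  exists K : R, 0 < K /\ exists r0 : R, 0 < r0 /\ forall r : R, 0 < r -> r <= r0 ->
   exists h : R, 0 <= h /\ h <= r / 2 /\
     K * r `^ (alpha^-1 - 1 + 2) <= 2 * h * (r / 6) /\
     forall x, x0 - h <= x <= x0 + h -> `|g x - g x0| <= r / 4.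
Proof.
move=> a0 a1 [C [C0 [c [delta [d0 H]]]]].
have gc : g x0 = c.
  have := H x0; rewrite subrr normr0 => /(_ d0).
  rewrite powR0 ?gt_eqF // mulr0 normr_le0 subr_eq0 => /eqP //.
set q := alpha^-1.
have q1 : 1 <= q by rewrite /q invf_ge1 // ltW.
set e := (4 * (C + 1))^-1.
have e0 : 0 < e by rewrite /e invr_gt0; lra.
have eE : 4 * (C + 1) * e = 1 by rewrite /e mulfV //; apply/eqP; lra.
exists (e `^ q / 3); split; first by rewrite divr_gt0 // powR_gt0.
exists (Order.min 1 (delta / 2)); split.
  by rewrite lt_min ltr01 /=; lra.
move=> r r0; rewrite le_min => /andP[r1 rd].
set w := r * e.
have w0 : 0 < w by rewrite mulr_gt0.
have w1 : w <= 1 by rewrite /w; nra.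
have wr : w <= r / 2 by rewrite /w; nra.
exists (w `^ q).
have hw : w `^ q <= w by apply: ge1r_powR => //; rewrite w0.
have hge0 : 0 <= w `^ q by apply: powR_ge0.
split=> //; split; first by lra.
split.
  have -> : alpha^-1 - 1 + 2 = q + 1 by rewrite /q; ring.
  rewrite powRD; last by apply/implyP => _; rewrite gt_eqF.
  rewrite (powRr1 (ltW r0)) /w (powRM _ (ltW r0) (ltW e0)).
  have -> : e `^ q / 3 * (r `^ q * r) = 2 * (r `^ q * e `^ q) * (r / 6) by field.
  exact: lexx.
move=> x /andP[xl xr].
have xh : `|x - x0| <= w `^ q by rewrite ler_norml; apply/andP; split; lra.
have xd : `|x - x0| < delta.
  by apply: (le_lt_trans xh); lra.
rewrite gc; apply: (le_trans (H x xd)).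
have : `|x - x0| `^ alpha <= (w `^ q) `^ alpha.
  by apply: ge0_ler_powR => //; rewrite ltW.
rewrite -powRrM /q mulVf ?gt_eqF // (powRr1 (ltW w0)) => hp.
apply: (le_trans (ler_wpM2l (ltW C0) hp)).
rewrite /w; nra.
Qed.

Lemma acc_gen (R : realType) (p : R) (A : set (R * R)) (x0 y0 : R) (lo : R -> R) :
  (exists K : R, 0 < K /\ exists r0 : R, 0 < r0 /\ forall r : R, 0 < r -> r <= r0 ->
   exists h : R, 0 <= h /\ h <= r / 2 /\
     K * r `^ (p + 2) <= 2 * h * (r / 6) /\
     y0 - r / 2 <= lo r /\ lo r + r / 6 <= y0 + r / 2 /\
     forall P : R * R, x0 - h <= P.1 <= x0 + h -> lo r <= P.2 <= lo r + r / 6 -> A P) ->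
  strong_accessible p A (x0, y0).
Proof.
move=> [K [K0 [r0 [r00 H]]]]; exists K; split=> //; exists r0; split=> //.
move=> r rp rr0; have [h [h0 [hr [Kh [l1 [l2 HA]]]]]] := H r rp rr0.
exists (`[x0 - h, x0 + h] `*` `[lo r, lo r + r / 6]); split.
  by apply: measurableX; exact: measurable_itv.
split.
  move=> P [/= P1 P2]; rewrite !in_itv /= in P1 P2; split; first exact: HA.
  rewrite /disc /=.
  move: P1 P2 => /andP[a1 a2] /andP[b1 b2].
  nra.
rewrite rect_meas; last 2 first.
- lra.
- lra.
rewrite lee_fin; apply: (le_trans Kh).
have -> : x0 + h - (x0 - h) = 2 * h by ring.
have -> : lo r + r / 6 - lo r = r / 6 by ring.
exact: lexx.
Qed.

Theorem mainTheorem2 (R : realType) (alpha : R) (g : R -> R) (x0 : R) :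
  0 < alpha -> alpha < 1 ->
  locally_bounded g -> pointwise_holder alpha g x0 ->
  let X0 := (x0, g x0) in
  let p := alpha^-1 - 1 in
  (strong_accessible p (below_graph g) X0 /\
   strong_accessible p (~` below_graph g) X0) /\
  (strong_accessible p (above_graph g) X0 /\
   strong_accessible p (~` above_graph g) X0).
Proof.
move=> a0 a1 _ Hh X0 p.
have [K [K0 [r0 [r00 H]]]] := core _ _ _ _ a0 a1 Hh.
have G : forall (A : set (R * R)) (lo : R -> R),
  (forall r, 0 < r -> g x0 - r / 2 <= lo r /\ lo r + r / 6 <= g x0 + r / 2) ->
  (forall r P, 0 < r -> `|g P.1 - g x0| <= r / 4 -> lo r <= P.2 <= lo r + r / 6 -> A P) ->
  strong_accessible p A X0.
  move=> A lo Hlo HA; rewrite /X0; apply: (@acc_gen R p A x0 (g x0) lo).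
  exists K; split=> //; exists r0; split=> // r rp rr0.
  have [h [h0 [hr [Kh Hg]]]] := H r rp rr0.
  have [l1 l2] := Hlo r rp.
  exists h; do 5 (split=> //).
  move=> P /Hg Pg PI; exact: (HA r P rp Pg PI).
have Hlo1 : forall r, 0 < r -> g x0 - r / 2 <= g x0 - r / 2 /\ g x0 - r / 2 + r / 6 <= g x0 + r / 2.
  by move=> r rp; split; lra.
have Hlo2 : forall r, 0 < r -> g x0 - r / 2 <= g x0 + r / 3 /\ g x0 + r / 3 + r / 6 <= g x0 + r / 2.
  by move=> r rp; split; lra.
split; split.
- apply: (G _ _ Hlo1) => r P rp; rewrite ler_norml => /andP[u1 u2] /andP[v1 v2].
  rewrite /below_graph /=; lra.
- apply: (G _ _ Hlo2) => r P rp; rewrite ler_norml => /andP[u1 u2] /andP[v1 v2].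
  rewrite /below_graph /=; apply/negP; rewrite -ltNge; lra.
- apply: (G _ _ Hlo2) => r P rp; rewrite ler_norml => /andP[u1 u2] /andP[v1 v2].
  rewrite /above_graph /=; lra.
- apply: (G _ _ Hlo1) => r P rp; rewrite ler_norml => /andP[u1 u2] /andP[v1 v2].
  rewrite /above_graph /=; apply/negP; rewrite -ltNge; lra.
Qed.
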